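(* Let $q=(n^2+3n)/2$, $n<p<q$, $\delta>0$, $\Lambda>0$, and let $\mathcal{Y}=\{y^0,y^1,\dots,y^p\}\subset\mathbb{R}^n$ be a $\Lambda$-poised set in $\overline{B}(y^0,\delta)$ in the minimum Frobenius norm sense. Let $\mathbf{L}_s\in\mathbb{R}^{p\times n}$ be the matrix whose $i$-th row is $(y^i-y^0)^T$, $i=1,\dots,p$, and $\hat{\mathbf{L}}_s=\frac1\delta\mathbf{L}_s$. Then \[ \|\hat{\mathbf{L}}_s^{\dagger}\|\le\Lambda\sqrt{2(n+1)}\,(p+1), \] where $\hat{\mathbf{L}}_s^{\dagger}$ is the Moore--Penrose pseudo-inverse of $\hat{\mathbf{L}}_s$.
   Context: $\overline{B}(x,\delta)$ is the closed Euclidean ball; $\|\cdot\|$ is the Euclidean norm / induced matrix norm, $\|\cdot\|_\infty$ the max norm. Natural basis of quadratic polynomials: $\overline\phi_L(x)=(1,x_1,\dots,x_n)$ and $\overline\phi_Q(x)=(\tfrac12x_1^2,x_1x_2,\dots,x_1x_n,\tfrac12x_2^2,\dots,x_{n-1}x_n,\tfrac12x_n^2)$. For a list of functions $\phi=(\phi_0,\dots,\phi_r)$, $\mathbf{M}(\phi,\mathcal{Y})$ is the $(p+1)\times(r+1)$ matrix with $(i,k)$ entry $\phi_k(y^i)$. $\mathcal{Y}$ is poised in the minimum Frobenius norm sense if the matrix $\begin{bmatrix}\mathbf{M}(\overline\phi_Q,\mathcal{Y})\mathbf{M}(\overline\phi_Q,\mathcal{Y})^T & \mathbf{M}(\overline\phi_L,\mathcal{Y})\\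 \mathbf{M}(\overline\phi_L,\mathcal{Y})^T & 0\end{bmatrix}$ is nonsingular. A poised set $\mathcal{Y}$ is $\Lambda$-poised in $B\subseteq\mathbb{R}^n$ in the minimum Frobenius norm sense if for every $x\in B$ the solution $\lambda(x)\in\mathbb{R}^{p+1}$ of $\min\frac12\|\mathbf{M}(\overline\phi_Q,\mathcal{Y})^T\lambda-\overline\phi_Q(x)\|^2$ subject to $\mathbf{M}(\overline\phi_L,\mathcal{Y})^T\lambda=\overline\phi_L(x)$ satisfies $\|\lambda(x)\|_\infty\le\Lambda$. *)

(* Defs.v *)
From HB Require Import structures.
From mathcomp Require Import all_boot all_order all_algebra.
From mathcomp Require Import boolp classical_sets reals.
Set Implicit Arguments. Unset Strict Implicit. Unset Printing Implicit Defensive.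
Import Order.TTheory GRing.Theory Num.Theory.
Local Open Scope ring_scope.

Section Defs.
Variable R : realType.

Definition rnorm k (v : 'rV[R]_k) : R := Num.sqrt (\sum_(j < k) v 0 j ^+ 2).
Definition cnorm k (v : 'cV[R]_k) : R := Num.sqrt (\sum_(i < k) v i 0 ^+ 2).

Definition infnorm k (v : 'cV[R]_k) : R := \big[Num.max/0]_(i < k) `|v i 0|.

Definition opnorm m k (A : 'M[R]_(m, k)) : R :=
  sup [set r : R | exists x : 'cV[R]_k, cnorm x <= 1 /\ r = cnorm (A *m x)].

Definition cball n (c : 'rV[R]_n) (d : R) : set 'rV[R]_n :=
  [set x | rnorm (x - c) <= d].

Definition is_MP_pinv m k (A : 'M[R]_(m, k)) (X : 'M[R]_(k, m)) : Prop :=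
  [/\ A *m X *m A = A, X *m A *m X = X, (A *m X)^T = A *m X & (X *m A)^T = X *m A].

(* natural basis of quadratic polynomials *)
Definition phiL n (x : 'rV[R]_n) : 'rV[R]_(1 + n) := row_mx (const_mx 1) x.

Definition QIdx n := {ij : 'I_n * 'I_n | (ij.1 <= ij.2)%N}.

(* components (1/2 x_i^2, x_i x_j (i<j)) in lexicographic order of (i,j), i<=j *)
Definition phiQ n (x : 'rV[R]_n) : 'rV[R]_#|{: QIdx n}| :=
  \row_(c < #|{: QIdx n}|)
     let ij := val (enum_val c) in
     if ij.1 == ij.2 then x 0 ij.1 ^+ 2 / 2 else x 0 ij.1 * x 0 ij.2.

Definition Mphi n r m (phi : 'rV[R]_n -> 'rV[R]_r) (y : 'I_m -> 'rV[R]_n)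
  : 'M[R]_(m, r) := \matrix_(i < m, k < r) phi (y i) 0 k.

Definition MFN_poised n m (y : 'I_m -> 'rV[R]_n) : Prop :=
  let MQ := Mphi (@phiQ n) y in
  let ML := Mphi (@phiL n) y in
  block_mx (MQ *m MQ^T) ML ML^T 0 \in unitmx.

Definition MFN_lambda n m (y : 'I_m -> 'rV[R]_n) (x : 'rV[R]_n) (lam : 'cV[R]_m)
  : Prop :=
  let MQ := Mphi (@phiQ n) y in
  let ML := Mphi (@phiL n) y in
  ML^T *m lam = (phiL x)^T /\
  forall lam' : 'cV[R]_m, ML^T *m lam' = (phiL x)^T ->
    cnorm (MQ^T *m lam - (phiQ x)^T) ^+ 2 / 2
      <= cnorm (MQ^T *m lam' - (phiQ x)^T) ^+ 2 / 2.

Definition MFN_Lambda_poised n m (y : 'I_m -> 'rV[R]_n) (Lam : R)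
  (B : set 'rV[R]_n) : Prop :=
  MFN_poised y /\
  forall x, B x -> forall lam, MFN_lambda y x lam -> infnorm lam <= Lam.

Definition Lmat n p (y : 'I_p.+1 -> 'rV[R]_n) : 'M[R]_(p, n) :=
  \matrix_(i < p, j < n) (y (lift ord0 i) 0 j - y ord0 0 j).

End Defs.

(* Main.v *)
Require Import Defs.
From HB Require Import structures.
From mathcomp Require Import all_boot all_order all_algebra.
From mathcomp Require Import boolp classical_sets reals.
From mathcomp.algebra_tactics Require Import ring lra.
Import Order.TTheory GRing.Theory Num.Theory.
Set Implicit Arguments. Unset Strict Implicit.
Local Open Scope ring_scope.

Section Aux.
Variable R : realType.

Lemma dotE k (a b : 'cV[R]_k) : (a^T *m b) 0 0 = \sum_i a i 0 * b i 0.
Proof. by rewrite mxE; apply: eq_bigr => i _; rewrite mxE. Qed.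

Lemma dot_ge0 k (a : 'cV[R]_k) : 0 <= (a^T *m a) 0 0.
Proof. by rewrite dotE sumr_ge0 // => i _; rewrite -expr2 sqr_ge0. Qed.

Lemma cnorm_ge0 k (c : 'cV[R]_k) : 0 <= cnorm c.
Proof. by rewrite /cnorm sqrtr_ge0. Qed.

Lemma cnorm_sq k (c : 'cV[R]_k) : cnorm c ^+ 2 = (c^T *m c) 0 0.
Proof.
rewrite /cnorm sqr_sqrtr; last by rewrite sumr_ge0 // => i _; rewrite sqr_ge0.
by rewrite dotE; apply: eq_bigr => i _; rewrite expr2.
Qed.

Lemma cnormE k (c : 'cV[R]_k) : cnorm c = Num.sqrt ((c^T *m c) 0 0).
Proof. by rewrite -cnorm_sq sqrtr_sqr ger0_norm // cnorm_ge0. Qed.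

Lemma cnorm_le k (c : 'cV[R]_k) b : 0 <= b -> (c^T *m c) 0 0 <= b ^+ 2 -> cnorm c <= b.
Proof.
move=> b0 h; rewrite cnormE -(ger0_norm b0) -sqrtr_sqr ler_sqrt //.
by rewrite sqr_ge0.
Qed.

Lemma exists_lambda n m (y : 'I_m -> 'rV[R]_n) x :
  MFN_poised y -> exists lam, MFN_lambda y x lam.
Proof.
rewrite /MFN_poised /MFN_lambda /=.
set MQ := Mphi _ y; set ML := Mphi _ y => HU.
set M := block_mx _ _ _ _ in HU.
set rhs := col_mx (MQ *m (phiQ x)^T) (phiL x)^T.
set s := invmx M *m rhs.
have Ms : M *m s = rhs by rewrite /s mulmxA mulmxV // mul1mx.
rewrite -[s]vsubmxK /M mul_block_col mul0mx addr0 in Ms.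
case/eq_col_mx: Ms => E1 E2.
exists (usubmx s); split => // lam' Hlam'.
set d := lam' - usubmx s.
have Hd : ML^T *m d = 0 by rewrite /d mulmxBr Hlam' E2 subrr.
set a := MQ^T *m usubmx s - (phiQ x)^T.
set b := MQ^T *m d.
have -> : MQ^T *m lam' - (phiQ x)^T = a + b.
  rewrite /a /b /d mulmxBr.
  set P := MQ^T *m lam'. set S := MQ^T *m usubmx s. set F := (phiQ x)^T.
  by rewrite [RHS]addrC addrA subrK.
have Ha : MQ *m a = - (ML *m dsubmx s).
  by rewrite /a mulmxBr mulmxA -E1 opprD addrA subrr add0r.
have orth : a^T *m b = 0.
  rewrite /b mulmxA -trmx_mul Ha raddfN /=.
  by rewrite mulNmx trmx_mul -mulmxA Hd mulmx0 oppr0.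
clearbody a b.
have orth2 : b^T *m a = 0.
  have Et : b^T *m a = (a^T *m b)^T.
    by rewrite trmx_mul trmxK.
  rewrite Et.
  by rewrite orth trmx0.
have E : (a + b)^T *m (a + b) = a^T *m a + b^T *m b.
  by rewrite !mulmxDr raddfD /= !mulmxDl orth orth2 addr0 add0r.
rewrite !cnorm_sq E; set u := a^T *m a; set w := b^T *m b; rewrite [(u + w) 0 0]mxE.
have := dot_ge0 b; rewrite -/w; lra.
Qed.


Lemma phiL_l n (x : 'rV[R]_n) : phiL x 0 (lshift n (ord0 : 'I_1)) = 1.
Proof. by rewrite /phiL row_mxEl mxE. Qed.

Lemma phiL_r n (x : 'rV[R]_n) j : phiL x 0 (rshift 1 j) = x 0 j.
Proof. by rewrite /phiL row_mxEr. Qed.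

Lemma MLlam n m (y : 'I_m -> 'rV[R]_n) (lam : 'cV[R]_m) k :
  ((Mphi (@phiL R n) y)^T *m lam) k 0 = \sum_i phiL (y i) 0 k * lam i 0.
Proof. by rewrite mxE; apply: eq_bigr => i _; rewrite !mxE. Qed.
End Aux.

Theorem theorem4 (R : realType) (n p : nat) (delta Lam : R)
  (y : 'I_p.+1 -> 'rV[R]_n) :
  (n < p)%N -> (p < (n ^ 2 + 3 * n) %/ 2)%N ->
  0 < delta -> 0 < Lam ->
  MFN_Lambda_poised y Lam (cball (y ord0) delta) ->
  forall X : 'M[R]_(n, p), is_MP_pinv (delta^-1 *: Lmat y) X ->
    opnorm X <= Lam * Num.sqrt (2 * n.+1%:R) * p.+1%:R.
Proof.
move=> _ _ dpos Lpos [Hpois Hlam] X [H1 H2 H3 H4].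
set A := delta^-1 *: Lmat y.
have Bge0 : 0 <= Lam * p%:R by apply: mulr_ge0; [exact: ltW|exact: ler0n].
suff Hb : opnorm X <= Lam * p%:R.
  apply: le_trans Hb _.
  set s := Num.sqrt _.
  have s1 : 1 <= s.
    rewrite -sqrtr1 /s ler_sqrt; last by rewrite mulr_ge0.
    have : (1 <= n.+1%:R :> R) by rewrite ler1n.
    lra.
  rewrite -mulrA ler_wpM2l ?ltW // -natr1.
  have := ler0n R p; nra.
rewrite /opnorm; apply: ge_sup.
  exists 0, 0; split.
    by apply: cnorm_le => //; rewrite mulmx0 mxE expr1n ler01.
  by rewrite mulmx0 /cnorm big1 ?sqrtr0 // => i _; rewrite mxE expr0n.
move=> r [w [hw ->]].
set z := X *m w.
have c0 := cnorm_ge0 z.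
have [c_eq0|cne0] := eqVneq (cnorm z) 0; first by rewrite c_eq0.
have cpos : 0 < cnorm z by rewrite lt_def cne0 c0.
set c := cnorm z in c0 cne0 cpos *.
have zz : \sum_i z i 0 * z i 0 = c^+2 by rewrite /c cnorm_sq dotE.
set v := c^-1 *: z.
have vE i : v i 0 = c^-1 * z i 0 by rewrite mxE.
have hv : cnorm v <= 1.
  apply: cnorm_le => //; rewrite dotE.
  rewrite (eq_bigr (fun i => c^-1 * c^-1 * (z i 0 * z i 0))) => [|i _]; last first.
    by rewrite !vE; ring.
  by rewrite -mulr_sumr zz -expr2 -exprMn mulVf // expr1n.
set x := y ord0 + delta *: v^T.
have Bx : cball (y ord0) delta x.
  rewrite /cball /= /rnorm.
  have -> : x - y ord0 = delta *: v^T by rewrite /x addrC addKr.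
  rewrite (eq_bigr (fun j => delta^+2 * (v j 0)^+2)) => [|j _]; last first.
    by rewrite !mxE exprMn.
  rewrite -mulr_sumr sqrtrM ?sqr_ge0 // sqrtr_sqr (ger0_norm (ltW dpos)).
  move: hv; rewrite /cnorm; set t := Num.sqrt _ => ht.
  nra.
have [lam Hl] := exists_lambda x Hpois.
have Hinf := Hlam x Bx lam Hl.
case: Hl => Hc _.
have e0 := congr1 (fun M : 'cV[R]_(1 + n) => M (lshift n (ord0 : 'I_1)) 0) Hc.
have ej := fun j => congr1 (fun M : 'cV[R]_(1 + n) => M (rshift 1 j) 0) Hc.
rewrite /= MLlam [RHS]mxE phiL_l in e0.
have s1 : \sum_i lam i 0 = 1.
  by rewrite -e0; apply: eq_bigr => i _; rewrite phiL_l mul1r.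
have sy j : \sum_i y i 0 j * lam i 0 = x 0 j.
  have := ej j; rewrite /= MLlam [RHS]mxE phiL_r => <-.
  by apply: eq_bigr => i _; rewrite phiL_r.
set mu : 'cV[R]_p := \col_(i < p) lam (lift ord0 i) 0.
have Amu : A^T *m mu = v.
  apply/matrixP => j k; rewrite (ord1 k).
  have xj : x 0 j = y ord0 0 j + delta * v j 0 by rewrite /x !mxE.
  have hs : \sum_(i < p.+1) (y i 0 j - y ord0 0 j) * lam i 0 = delta * v j 0.
    rewrite (eq_bigr (fun i => y i 0 j * lam i 0 - y ord0 0 j * lam i 0));
      last by move=> i _; rewrite mulrBl.
    by rewrite sumrB -mulr_sumr s1 sy xj mulr1 addrC addKr.
  rewrite big_ord_recl subrr mul0r add0r in hs.
  rewrite mxE.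
  rewrite (eq_bigr (fun i => delta^-1 * ((y (lift ord0 i) 0 j - y ord0 0 j) * lam (lift ord0 i) 0)));
    last by move=> i _; rewrite !mxE mulrA.
  by rewrite -mulr_sumr hs mulrA mulVf ?mul1r // gt_eqF.
have cE : c = (mu^T *m (A *m X *m w)) 0 0.
  have -> : mu^T *m (A *m X *m w) = v^T *m z by rewrite -Amu trmx_mul trmxK /z !mulmxA.
  rewrite dotE (eq_bigr (fun i => c^-1 * (z i 0 * z i 0))) => [|i _]; last by rewrite vE mulrA.
  by rewrite -mulr_sumr zz expr2 mulKf.
have P2 : A *m X *m (A *m X) = A *m X by rewrite mulmxA H1.
have PT : (A *m X)^T = A *m X := H3.
move: cE P2 PT; set P := A *m X => cE P2 PT.
clearbody P.
set u := P *m w in cE.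
have uT : u^T = w^T *m P by rewrite /u trmx_mul PT.
have e1 : u^T *m u = w^T *m u by rewrite uT /u mulmxA -(mulmxA w^T P P) P2 mulmxA.
have e2 : u^T *m w = w^T *m u by rewrite uT /u mulmxA.
have ww : (w^T *m w) 0 0 <= 1.
  have := cnorm_sq w; have := cnorm_ge0 w; nra.
have uu : (u^T *m u) 0 0 <= 1.
  have h := dot_ge0 (w - u).
  have tB : (w - u)^T = w^T - u^T by rewrite raddfB.
  rewrite tB mulmxBl !mulmxBr e1 e2 in h.
  rewrite e1; move: h ww; set WW := w^T *m w; set WU := w^T *m u.
  rewrite !mxE; lra.
have hu i : `|u i 0| <= 1.
  move: uu; rewrite dotE (bigD1 i) //=.
  have : 0 <= \sum_(j | j != i) u j 0 * u j 0.
    by apply: sumr_ge0 => j _; rewrite -expr2 sqr_ge0.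
  move=> h1 h2; rewrite ler_norml; apply/andP; split; nra.
have hmu i : `|mu i 0| <= Lam.
  rewrite mxE; apply: le_trans Hinf; rewrite /infnorm.
  exact: (Order.TotalTheory.le_bigmax _ (fun k => `|lam k 0|) (lift ord0 i)).
rewrite cE dotE.
have -> : Lam * p%:R = \sum_(i < p) Lam by rewrite sumr_const card_ord mulr_natr.
apply: ler_sum => i _.
apply: le_trans (ler_norm _) _.
rewrite normrM.
have := hu i; have := hmu i; have := normr_ge0 (mu i 0); have := normr_ge0 (u i 0).
nra.
Qed.
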